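(* Let $d=2\delta$ be even, $\mathcal{C}\in(\mathbb{R}^I)^{\otimes d}$ symmetric, $v\in\mathbb{R}^I$ nonzero and $\mathcal{M}=\{v^{\otimes(d-1)}\}$. Let $\mathcal{T}=\sum_{j=1}^r\lambda_jx_j^{\otimes d}$ ($\lambda_j\in\mathbb{R}$, $x_j\in\mathbb{R}^I$) be a tensor of minimal symmetric rank $r=\operatorname{minsrk}(\mathcal{C}\bmod\mathcal{M})$ in $\mathcal{C}\bmod\mathcal{M}$. If $x_1^{\otimes\delta},\dots,x_r^{\otimes\delta},v^{\otimes\delta}$ are linearly independent, then $\operatorname{srk}\operatorname{SAdj}(\mathcal{C},\mathcal{M})=r+d=\operatorname{minsrk}(\mathcal{C}\bmod\mathcal{M})+d\dim\operatorname{Span}\mathcal{M}$.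
   Context: All tensors are real; symmetric rank $\operatorname{srk}$ is the minimal number of summands $\lambda u^{\otimes d}$. Symmetric adjoining: $\mathcal{M}$ is indexed by a finite set $W$ disjoint from $I$ (here $|W|=1$); $\operatorname{SAdj}(\mathcal{C},\mathcal{M})\in(\mathbb{R}^{I\cup W})^{\otimes d}$ has entries $\mathcal{C}(k_1|\dots|k_d)$ when all $k_i\in I$, entries $\mathcal{M}^{(w)}(k_1|\dots|\widehat{k_j}|\dots|k_d)$ when exactly the $j$th index equals $w\in W$ and the others lie in $I$, and $0$ otherwise. $\mathcal{C}\bmod\mathcal{M}$ is the set of tensors with entries $\mathcal{C}(k_1|\dots|k_d)+\sum_{j=1}^d M_j^{(k_j)}(k_1|\dots|\widehat{k_j}|\dots|k_d)$ with arbitrary $M_j^{(k_j)}\in\operatorname{Span}\mathcal{M}$ chosen independently for each $j$ and each $k_j\in I$. $\operatorname{minsrk}\mathcal{A}$ is the minimal symmetric rank of a symmetric tensor in $\mathcal{A}$. *)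

(* Defs.v *)
From HB Require Import structures.
From mathcomp Require Import all_boot all_order all_fingroup all_algebra.
From mathcomp Require Import reals.
Set Implicit Arguments. Unset Strict Implicit. Unset Printing Implicit Defensive.
Import Order.TTheory GRing.Theory Num.Theory.
Local Open Scope ring_scope.

Definition tensor (R : realType) (T : finType) (n : nat) := ('I_n -> T) -> R.

Definition tpow (R : realType) (T : finType) (u : T -> R) (n : nat) : tensor R T n :=
  fun k => \prod_(i < n) u (k i).
Arguments tpow {R T} u n _.

Definition sym_tensor (R : realType) (T : finType) (n : nat) (X : tensor R T n) : Prop :=
  forall (s : 'S_n) (k : 'I_n -> T), X (fun i => k (s i)) = X k.

Definition has_sdecomp (R : realType) (T : finType) (n : nat) (X : tensor R T n)
  (r : nat) : Prop :=
  exists (lam : 'I_r -> R) (u : 'I_r -> T -> R),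
    forall k, X k = \sum_(j < r) lam j * tpow (u j) n k.

Definition is_srk (R : realType) (T : finType) (n : nat) (X : tensor R T n)
  (r : nat) : Prop :=
  has_sdecomp X r /\ forall s, has_sdecomp X s -> (r <= s)%N.

Definition is_minsrk (R : realType) (T : finType) (n : nat)
  (A : tensor R T n -> Prop) (r : nat) : Prop :=
  (exists X, A X /\ sym_tensor X /\ is_srk X r) /\
  (forall X, A X -> sym_tensor X -> forall s, has_sdecomp X s -> (r <= s)%N).

Lemma skip_lt (d : nat) (j : 'I_d) (i : 'I_d.-1) : (bump j i < d)%N.
Proof.
case: d j i => [[]//|d] j i /=.
rewrite /bump; case: (j <= i)%N => /=; rewrite ?add1n ?add0n //.
exact: (ltn_ord i).
exact: (leq_trans (ltn_ord i)).
Qed.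

Definition skip (d : nat) (j : 'I_d) (i : 'I_d.-1) : 'I_d := Ordinal (skip_lt j i).

Definition delete_at (T : Type) (d : nat) (k : 'I_d -> T) (j : 'I_d) : 'I_d.-1 -> T :=
  fun i => k (skip j i).

(* C mod M for M = {m} (a single tensor of order d-1): the tensors with entries
   C(k) + sum_j M_j^{(k_j)}(k with j-th index deleted), M_j^{(a)} = c j a * m
   ranging over Span M independently for each j and a. *)
Definition Cmod (R : realType) (I : finType) (d : nat) (C : tensor R I d)
  (m : tensor R I d.-1) : tensor R I d -> Prop :=
  fun X => exists c : 'I_d -> I -> R,
    forall k, X k = C k + \sum_(j < d) c j (k j) * m (delete_at k j).

(* A = SAdj(C, {m}) with W = {w} realised as None in option I. *)
Definition is_SAdj (R : realType) (I : finType) (d : nat) (C : tensor R I d)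
  (m : tensor R I d.-1) (A : tensor R (option I) d) : Prop :=
  [/\ forall k : 'I_d -> I, A (fun i => Some (k i)) = C k,
      forall (j : 'I_d) (k : 'I_d -> I),
        A (fun i => if i == j then None else Some (k i)) = m (delete_at k j)
    & forall k : 'I_d -> option I,
        (1 < #|[set i | k i == None]|)%N -> A k = 0].

(* Main.v *)
Require Import Defs.
From HB Require Import structures.
From mathcomp Require Import all_boot all_order all_fingroup all_algebra.
From mathcomp Require Import reals.
From mathcomp Require Import zify ring lra.
From Stdlib Require Import FunctionalExtensionality.
Import Order.TTheory GRing.Theory Num.Theory.
Local Open Scope ring_scope.
Set Implicit Arguments. Unset Strict Implicit. Unset Printing Implicit Defensive.

Lemma widen_neq_max (n : nat) (i : 'I_n) :
  (widen_ord (leqnSn n) i == ord_max) = false.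
Proof. by apply/negbTE; rewrite -val_eqE /= neq_ltn ltn_ord. Qed.

Lemma coef1M (R : comNzRingType) (p q : {poly R}) :
  (p * q)`_1 = p`_0 * q`_1 + p`_1 * q`_0.
Proof. by rewrite coefM big_ord_recr big_ord1 /=. Qed.

Lemma coef1_prod (R : comNzRingType) (n : nat) (F : 'I_n -> {poly R}) :
  (\prod_(t < n) F t)`_1 =
  \sum_(j < n) (F j)`_1 * \prod_(t < n) (if t == j then 1 else (F t)`_0).
Proof.
elim: n F => [|n IH] F.
  by rewrite big_ord0 big_ord0 coefC.
rewrite big_ord_recr coef1M IH coef0_prod big_ord_recr /=.
rewrite big_distrl /= addrC; congr (_ + _).
  rewrite big_ord_recr /= eqxx mulr1 mulrC; congr (_ * _).
  by apply: eq_bigr => i _; rewrite widen_neq_max.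
apply: eq_bigr => j _; rewrite big_ord_recr /= -mulrA; congr (_ * _).
rewrite eq_sym widen_neq_max; congr (_ * _).
Qed.
Definition lagr (R : fieldType) (n : nat) (t : 'I_n -> R) (i : 'I_n) : {poly R} :=
  \prod_(j < n | j != i) (('X - (t j)%:P) * ((t i - t j)^-1)%:P).

Lemma size_lagr (R : fieldType) (n : nat) (t : 'I_n -> R) (i : 'I_n) :
  (size (lagr t i) <= n)%N.
Proof.
rewrite /lagr; apply: leq_trans (size_poly_prod_leq _ _) _.
set F := fun j => (('X - (t j)%:P) * ((t i - t j)^-1)%:P).
have h2 : forall j, leq (size (F j)) 2.
  move=> j; apply: leq_trans (size_mul_leq _ _) _.
  rewrite size_XsubC; have := size_polyC_leq1 ((t i - t j)^-1).
  by case: (size _) => [|[]].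
have h : leq (\sum_(j < n | j != i) size (F j)) (\sum_(j < n | j != i) 2)
  by apply: leq_sum => j _; apply: h2.
rewrite sum_nat_const in h.
have hc : #|[pred j : 'I_n | j != i]| = n.-1 by rewrite cardC1 card_ord.
move: h; rewrite /= hc => h.
have n0 : (0 < n)%N by case: n i {t hc h h2 F} => [[]|].
move: h n0; set S := (\sum_(_ < _ | _) _)%N; move: S => S; lia.
Qed.

Lemma lagr_eval (R : fieldType) (n : nat) (t : 'I_n -> R) (ht : injective t) (i k : 'I_n) :
  (lagr t i).[t k] = (i == k)%:R.
Proof.
rewrite /lagr horner_prod.
have [->|nik] := eqVneq i k.
  rewrite big1 // => j ji; rewrite hornerM hornerXsubC hornerC mulfV //.
  by rewrite subr_eq0; apply: contra ji => /eqP/ht ->.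
rewrite (bigD1 k) /=; last by rewrite eq_sym.
by rewrite hornerM hornerXsubC subrr mul0r mul0r.
Qed.

Lemma lagr_interp (R : fieldType) (n : nat) (t : 'I_n -> R) (ht : injective t)
  (P : {poly R}) : (size P <= n)%N -> P = \sum_(i < n) P.[t i] *: lagr t i.
Proof.
move=> hP; apply/eqP; rewrite -subr_eq0; apply/eqP.
set D := P - _.
have hD : (size D <= n)%N.
  apply: leq_trans (size_add _ _) _; rewrite geq_max hP /= size_opp.
  apply: leq_trans (size_sum _ _ _) _; apply/bigmax_leqP => i _.
  by apply: leq_trans (size_scale_leq _ _) _; apply: size_lagr.
apply/eqP; apply: contraT => D0.
have := max_poly_roots D0 (rs := [seq t i | i <- enum 'I_n]).
rewrite size_map size_enum_ord => /(_ _ _) h.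
have : (n < size D)%N.
  apply: h; last by rewrite map_inj_uniq ?enum_uniq.
  apply/allP => _ /mapP [k _ ->]; rewrite /root /D hornerD hornerN.
  rewrite horner_sum (bigD1 k) //= hornerZ lagr_eval // eqxx mulr1 big1 ?addr0 ?subrr //.
  by move=> i ik; rewrite hornerZ lagr_eval // (negbTE ik) mulr0.
by rewrite ltnNge hD.
Qed.
Lemma quad_small (R : fieldType) (n : nat) (t : 'I_n -> R) (ht : injective t)
  (P : {poly R}) : (size P <= n)%N ->
  \sum_(i < n) (lagr t i)`_1 * P.[t i] = P`_1.
Proof.
move=> hP; rewrite {2}(lagr_interp ht hP) coef_sum.
by apply: eq_bigr => i _; rewrite coefZ mulrC.
Qed.

Lemma size_le_pred (R : nzRingType) (p : {poly R}) (n : nat) :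
  (size p <= n.+1)%N -> p`_n = 0 -> (size p <= n)%N.
Proof.
move=> /leq_sizeP h hn; apply/leq_sizeP => j; rewrite leq_eqVlt => /orP [/eqP <- //|].
exact: h.
Qed.

Definition qnode (R : numFieldType) (dl : nat) (i : 'I_(dl + dl)) : R :=
  if (i < dl)%N then (i.+1)%:R else - ((i - dl).+1)%:R.

Lemma qnode_inj (R : numFieldType) (dl : nat) : injective (@qnode R dl).
Proof.
move=> i j; rewrite /qnode.
have np : forall a b : nat, (a.+1)%:R = - ((b.+1)%:R) :> R -> False.
  move=> a b /eqP; rewrite -subr_eq0 opprK -natrD pnatr_eq0 addSn //.
case: ifP => hi; case: ifP => hj.
- by move/eqP; rewrite eqr_nat eqSS => /eqP h; apply/val_inj.
- by move/np.
- by move/esym/np.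
- move/eqP; rewrite eqr_opp eqr_nat eqSS => /eqP h; apply/val_inj => /=.
  move: hi hj h; case: i => i /= _; case: j => j /= _; lia.
Qed.

Lemma qnode_prod_coef1 (R : numFieldType) (dl : nat) :
  (\prod_(i < dl + dl) ('X - (@qnode R dl i)%:P))`_1 = 0.
Proof.
rewrite big_split_ord /= -big_split /= coef1_prod big1 // => s _.
rewrite coef1M !coefB !coefX !coefC /= /qnode /=.
have -> : (s < dl)%N = true by rewrite ltn_ord.
have -> : (dl + s < dl)%N = false by rewrite ltnNge leq_addr.
rewrite addKn; rewrite !subr0 !sub0r opprK mulr1 mul1r addrC subrr mul0r //.
Qed.
Lemma quadrature (R : numFieldType) (dl : nat) :
  exists (mu tt : 'I_(dl + dl) -> R), forall P : {poly R},
    (size P <= (dl + dl).+1)%N -> \sum_(i < dl + dl) mu i * P.[tt i] = P`_1.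
Proof.
set n := (dl + dl)%N.
exists (fun i => (lagr (@qnode R dl) i)`_1), (@qnode R dl) => P hP.
set q := \prod_(i < n) ('X - (@qnode R dl i)%:P).
have sq : size q = n.+1 by rewrite size_prod_XsubC /index_enum unlock -enumT -cardE card_ord.
have mq : q`_n = 1.
  have := monic_prod_XsubC (index_enum 'I_n) xpredT (@qnode R dl).
  by move/monicP; rewrite /lead_coef sq.
set P' := P - P`_n *: q.
have hP' : (size P' <= n)%N.
  apply: size_le_pred; last by rewrite coefB coefZ mq mulr1 subrr.
  apply: leq_trans (size_add _ _) _; rewrite geq_max hP size_opp.
  by apply: leq_trans (size_scale_leq _ _) _; rewrite sq.
have -> : P = P' + P`_n *: q by rewrite /P' subrK.
rewrite coefD coefZ qnode_prod_coef1 mulr0 addr0 -(quad_small (@qnode_inj R dl) hP').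
apply: eq_bigr => i _; rewrite hornerD hornerZ.
suff -> : q.[@qnode R dl i] = 0 by rewrite mulr0 addr0.
rewrite /q horner_prod (bigD1 i) //= hornerXsubC subrr mul0r //.
Qed.
Definition Vd (R : fieldType) (I : finType) (d : nat) (v : I -> R) (k : 'I_d -> I) (j : 'I_d) : R :=
  \prod_(t < d) (if t == j then 1 else v (k t)).

Lemma skip_lift (d : nat) (j : 'I_d) (i : 'I_d.-1) : skip j i = lift j i.
Proof. by apply: val_inj. Qed.

Lemma del_prod (R : realType) (I : finType) (d : nat) (v : I -> R) (k : 'I_d -> I) (j : 'I_d) :
  tpow v d.-1 (delete_at k j) = Vd v k j.
Proof.
rewrite /Vd (bigD1_ord j) //= eqxx mul1r /tpow /delete_at.
apply: eq_bigr => i _; rewrite skip_lift eq_sym (negbTE (neq_lift _ _)) //.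
Qed.

Lemma Vd_perm (R : fieldType) (I : finType) (d : nat) (v : I -> R) (k : 'I_d -> I) (j : 'I_d) (s : 'S_d) :
  Vd v (fun t => k (s t)) j = Vd v k (s j).
Proof.
rewrite /Vd [RHS](reindex_inj (@perm_inj _ s)) /=.
by apply: eq_bigr => t _; rewrite (inj_eq (@perm_inj _ s)).
Qed.

Definition cyc (d : nat) (m : 'I_d) (t : 'I_d) : 'I_d :=
  Ordinal (ltn_pmod (t + m) (leq_ltn_trans (leq0n _) (ltn_ord m))).

Lemma cyc_inj (d : nat) (m : 'I_d) : injective (cyc m).
Proof.
move=> t t' /(congr1 val) /= /eqP; rewrite -!(addnC m) eqn_modDl !modn_small //.
by move/eqP/val_inj.
Qed.

Lemma cyc_inj2 (d : nat) (t : 'I_d) : injective (fun m => cyc m t).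
Proof.
move=> m m' /(congr1 val) /= /eqP; rewrite eqn_modDl !modn_small //.
by move/eqP/val_inj.
Qed.

Lemma sym_normal (R : numFieldType) (I : finType) (d : nat) (v : I -> R) (c : 'I_d -> I -> R)
  (G : ('I_d -> I) -> R)
  (HG0 : forall k, G k = \sum_(j < d) c j (k j) * Vd v k j)
  (HG : forall (s : 'S_d) k, G (fun t => k (s t)) = G k) :
  forall k, G k = \sum_(l < d) ((d%:R)^-1 * \sum_(j < d) c j (k l)) * Vd v k l.
Proof.
move=> k.
case: d c G HG0 HG k => [|n] c G HG0 HG k.
  by rewrite HG0 !big_ord0.
have dn0 : (n.+1)%:R != 0 :> R by rewrite pnatr_eq0.
apply: (mulfI dn0); rewrite big_distrr /=.
have -> : (n.+1)%:R * G k = \sum_(m < n.+1) G (fun t => k (perm (@cyc_inj n.+1 m) t)).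
  rewrite (eq_bigr (fun _ => G k)); last by move=> m _; rewrite HG.
  by rewrite sumr_const card_ord mulr_natl.
transitivity (\sum_(m < n.+1) \sum_(j < n.+1) c j (k (cyc m j)) * Vd v k (cyc m j)).
  apply: eq_bigr => m _; rewrite HG0; apply: eq_bigr => j _.
  by rewrite Vd_perm !permE.
rewrite exchange_big /=.
rewrite [RHS](eq_bigr (fun i => \sum_(j < n.+1) c j (k i) * Vd v k i)); last first.
  by move=> i _; rewrite mulrA mulrA mulfV // mul1r big_distrl.
rewrite [RHS]exchange_big /=; apply: eq_bigr => j _.
by rewrite [RHS](reindex_inj (@cyc_inj2 n.+1 j)).
Qed.
Lemma split_l (m n : nat) (j : 'I_m) : split (lshift n j) = inl j.
Proof. exact: (unsplitK (inl _ j)). Qed.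
Lemma split_r (m n : nat) (j : 'I_n) : split (rshift m j) = inr j.
Proof. exact: (unsplitK (inr _ j)). Qed.

Lemma tpow_perm (R : realType) (T : finType) (n : nat) (u : T -> R) (s : 'S_n) (k : 'I_n -> T) :
  tpow u n (fun i => k (s i)) = tpow u n k.
Proof. by rewrite /tpow [RHS](reindex_inj (@perm_inj _ s)). Qed.

Lemma tpow_zero (R : realType) (T : finType) (n : nat) (u : T -> R) (k : 'I_n -> T) (t0 : 'I_n) :
  u (k t0) = 0 -> tpow u n k = 0.
Proof. by move=> h; rewrite /tpow (bigD1 t0) //= h mul0r. Qed.

Lemma sym_sum (R : realType) (T : finType) (n r : nat) (lam : 'I_r -> R) (x : 'I_r -> T -> R) :
  sym_tensor (fun k : 'I_n -> T => \sum_(j < r) lam j * tpow (x j) n k).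
Proof. by move=> s k; apply: eq_bigr => j _; rewrite tpow_perm. Qed.

Definition optf (R : realType) (I : finType) (f : I -> R) (z : R) (o : option I) : R :=
  match o with Some a => f a | None => z end.

Definition Pfac (R : realType) (I : finType) (v u : I -> R) (o : option I) : {poly R} :=
  match o with Some a => (v a)%:P + u a *: 'X | None => 'X end.

Lemma size_Pfac (R : realType) (I : finType) (v u : I -> R) (o : option I) :
  leq (size (Pfac v u o)) 2.
Proof.
case: o => [a|] /=; last by rewrite size_polyX.
apply: leq_trans (size_add _ _) _; rewrite geq_max; apply/andP; split.
  by apply: leq_trans (size_polyC_leq1 _) _.
by apply: leq_trans (size_scale_leq _ _) _; rewrite size_polyX.
Qed.

Lemma size_Pprod (R : realType) (I : finType) (n : nat) (v u : I -> R) (k : 'I_n -> option I) :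
  leq (size (\prod_(t < n) Pfac v u (k t))) n.+1.
Proof.
apply: leq_trans (size_poly_prod_leq _ _) _.
have h : leq (\sum_(t < n) size (Pfac v u (k t))) (\sum_(t < n) 2)
  by apply: leq_sum => t _; apply: size_Pfac.
rewrite sum_nat_const card_ord in h.
rewrite cardE size_enum_ord.
move: h; set S := (\sum_(_ < _) _)%N; move: S => S; lia.
Qed.

Lemma Pfac0 (R : realType) (I : finType) (v u : I -> R) (o : option I) :
  (Pfac v u o)`_0 = optf v 0 o.
Proof. by case: o => [a|] /=; rewrite ?coefD ?coefC ?coefZ ?coefX /= ?mulr0 ?addr0. Qed.
Lemma Pfac1 (R : realType) (I : finType) (v u : I -> R) (o : option I) :
  (Pfac v u o)`_1 = optf u 1 o.
Proof. by case: o => [a|] /=; rewrite ?coefD ?coefC ?coefZ ?coefX /= ?mulr1 ?add0r. Qed.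

Lemma upper (R : realType) (I : finType) (dl : nat) (e : I)
  (C : tensor R I (dl + dl)) (HC : sym_tensor C)
  (v : I -> R) (r : nat) (lam : 'I_r -> R) (x : 'I_r -> I -> R)
  (HT : Cmod C (tpow v (dl + dl).-1) (fun k => \sum_(j < r) lam j * tpow (x j) (dl + dl) k))
  (A : tensor R (option I) (dl + dl)) (HA : is_SAdj C (tpow v (dl + dl).-1) A) :
  has_sdecomp A (r + (dl + dl)).
Proof.
set n := (dl + dl)%N.
set T := (fun k => \sum_(j < r) lam j * tpow (x j) n k).
case: HT => c Hc.
set G := fun k => T k - C k.
have HG0 : forall k, G k = \sum_(j < n) c j (k j) * Vd v k j.
  move=> k; rewrite /G /T Hc addrAC subrr add0r; apply: eq_bigr => j _.
  by rewrite del_prod.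
have HGs : forall (s : 'S_n) k, G (fun t => k (s t)) = G k.
  by move=> s k; rewrite /G /T HC (sym_sum lam x s k).
have Hn := sym_normal HG0 HGs.
set u := fun a => - ((n%:R)^-1 * \sum_(j < n) c j a).
have HCu : forall k, C k = T k + \sum_(l < n) u (k l) * Vd v k l.
  move=> k; rewrite -[C k](subKr (T k)) -/(G k) Hn -sumrN; congr (_ + _).
  by apply: eq_bigr => l _; rewrite /u mulNr.
have [mu [tt Hq]] := quadrature R dl.
exists (fun i => match split i with inl j => lam j | inr m => mu m end).
exists (fun i => match split i with inl j => optf (x j) 0 | inr m => optf (fun a => v a + tt m * u a) (tt m) end).
move=> k; rewrite big_split_ord /=.
under eq_bigr => j _ do rewrite split_l.
under [X in _ + X]eq_bigr => m _ do rewrite split_r.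
have Hsec : \sum_(m < n) mu m * tpow (optf (fun a => v a + tt m * u a) (tt m)) n k =
   (\prod_(t < n) Pfac v u (k t))`_1.
  rewrite -Hq ?size_Pprod //; apply: eq_bigr => m _; congr (_ * _).
  rewrite horner_prod; apply: eq_bigr => t _; case: (k t) => [a|] /=.
    by rewrite hornerD hornerC hornerZ hornerX mulrC.
  by rewrite hornerX.
rewrite Hsec coef1_prod.
case: HA => HA1 HA2 HA3.
case: (boolP [exists t, k t == None]) => [/existsP [t0 /eqP kt0] | /existsPn hall].
  rewrite big1 ?add0r; last by move=> j _; rewrite (@tpow_zero _ _ _ _ _ t0) ?mulr0 // kt0.
  set N := [set t | k t == None].
  have t0N : t0 \in N by rewrite inE kt0.
  set k' := fun t => odflt e (k t).
  have [/cards1P [j0 N1] | N2] := boolP (#|N| == 1%N).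
    have j0t0 : t0 = j0 by apply/set1P; rewrite -N1.
    subst j0.
    have ek : k = fun i => if i == t0 then None else Some (k' i).
      apply: functional_extensionality => i; rewrite /k'.
      have := erefl (i \in N); rewrite {2}N1 inE in_set1.
      by case: (k i) => [a|] /=; case: (i == t0).
    rewrite ek HA2 del_prod. rewrite (bigD1 t0) //= eqxx.
    rewrite [X in _ + X]big1 ?addr0; last first.
      move=> j jt0; have jt0' : (t0 == j) = false by rewrite eq_sym (negbTE jt0).
      rewrite (bigD1 t0) //= jt0' eqxx Pfac0 /=.
      by rewrite mul0r mulr0.
    rewrite Pfac1 /= mul1r /Vd; apply: eq_bigr => t _.
    by case: (t == t0) => //; rewrite Pfac0.
  have N2' : (1 < #|N|)%N.
    by rewrite ltn_neqAle eq_sym N2 /= card_gt0; apply/set0Pn; exists t0.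
  rewrite HA3 //; symmetry; apply: big1 => j _.
  have [y1 [y2 [y1N y2N y12]]] := card_gt1P N2'.
  have [t1 [t1N t1j]] : exists t1, t1 \in N /\ t1 != j.
    case: (eqVneq y1 j) => [ej|nj]; last by exists y1.
    by exists y2; split => //; rewrite -ej eq_sym.
  rewrite (bigD1 t1) //= (negbTE t1j) Pfac0; move: t1N; rewrite inE => /eqP -> /=.
  by rewrite mul0r mulr0.
set k' := fun t => odflt e (k t).
have ek : k = fun i => Some (k' i).
  apply: functional_extensionality => i; rewrite /k'; have := hall i.
  by case: (k i).
rewrite ek HA1 HCu /T; congr (_ + _).
apply: eq_bigr => j _; rewrite Pfac1 /=; congr (_ * _).
by rewrite /Vd; apply: eq_bigr => t _; case: (t == j) => //; rewrite coefD coefC coefZ coefX /= mulr0 addr0.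
Qed.
Lemma prod_ifn (R : comNzRingType) (d n : nat) (a b : R) : (n <= d)%N ->
  \prod_(t < d) (if (t < n)%N then a else b) = a ^+ n * b ^+ (d - n).
Proof.
move=> nd; rewrite -(big_mkord xpredT (fun t : nat => if (t < n)%N then a else b)).
rewrite (big_cat_nat (n:=n)) //=.
rewrite (eq_big_nat _ _ (F2 := fun _ => a)); last by move=> i /andP [_ ->].
rewrite [X in _ * X](eq_big_nat _ _ (F2 := fun _ => b)); last first.
  by move=> i /andP [hi _]; rewrite ltnNge hi.
by rewrite !prodr_const_nat subn0.
Qed.

Lemma moments (R : realType) (I : finType) (d : nat) (C : tensor R I d) (v : I -> R) (e : I)
  (A : tensor R (option I) d) (HA : is_SAdj C (tpow v d.-1) A)
  (s : nat) (lam' : 'I_s -> R) (y : 'I_s -> option I -> R)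
  (Hdec : forall k, A k = \sum_(i < s) lam' i * tpow (y i) d k) (n : nat) :
  (n < d)%N ->
  \sum_(i < s) lam' i * (y i (Some e) ^+ n * y i None ^+ (d - n)) =
  if n == d.-1 then v e ^+ d.-1 else 0.
Proof.
move=> nd; case: HA => HA1 HA2 HA3.
set kn := fun t : 'I_d => if (t < n)%N then Some e else None.
have <- : A kn = \sum_(i < s) lam' i * (y i (Some e) ^+ n * y i None ^+ (d - n)).
  rewrite Hdec; apply: eq_bigr => i _; congr (_ * _).
  rewrite /tpow -prod_ifn ?(ltnW nd) //; apply: eq_bigr => t _.
  by rewrite /kn; case: ifP.
case: eqP => [hn | hn].
  have dm : (d.-1 < d)%N by rewrite -hn.
  have -> : kn = fun t => if t == Ordinal dm then None else Some e.
    apply: functional_extensionality => t; rewrite /kn -val_eqE /= hn.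
    have := ltn_ord t; rewrite -subn1; case: (ltngtP t (d - 1)) => //; lia.
  by rewrite (HA2 (Ordinal dm) (fun _ => e)) /tpow /delete_at prodr_const card_ord.
apply: HA3; apply/card_gt1P.
have d2 : (n.+2 <= d)%N by lia.
have h1 : (d.-1 < d)%N by lia.
have h2 : (d.-2 < d)%N by lia.
exists (Ordinal h1), (Ordinal h2); rewrite !inE /kn /= -val_eqE /=.
have -> : (d.-1 < n)%N = false by apply/negbTE; rewrite -leqNgt; lia.
have -> : (d.-2 < n)%N = false by apply/negbTE; rewrite -leqNgt; lia.
by split => //; lia.
Qed.
Lemma count_S (R : realType) (I : finType) (d : nat) (C : tensor R I d) (v : I -> R) (e : I)
  (ve : v e != 0) (A : tensor R (option I) d) (HA : is_SAdj C (tpow v d.-1) A)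
  (s : nat) (lam' : 'I_s -> R) (y : 'I_s -> option I -> R)
  (Hdec : forall k, A k = \sum_(i < s) lam' i * tpow (y i) d k) (d0 : (0 < d)%N) :
  (d <= #|[set i | y i None != 0%R]|)%N.
Proof.
set S := [set i | y i None != 0].
rewrite leqNgt; apply/negP => hS.
set c := fun i => y i (Some e) / y i None.
set p := \prod_(i <- enum S) ('X - (c i)%:P).
set q := p * 'X^(d.-1 - #|S|).
have sp : size p = #|S|.+1 by rewrite size_prod_XsubC cardE.
have mp : p \is monic by apply: monic_prod_XsubC.
have p0 : p != 0 by rewrite -size_poly_eq0 sp.
have sq : size q = d by rewrite size_mulXn // sp; lia.
have qd : q`_(d.-1) = 1.
  rewrite /q coefMXn ifF; last by apply/negbTE; rewrite -leqNgt leq_subr.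
  have -> : (d.-1 - (d.-1 - #|S|) = #|S|)%N by lia.
  by move/monicP: mp; rewrite /lead_coef sp.
have qc : forall i, i \in S -> q.[c i] = 0.
  move=> i iS; rewrite hornerM /p horner_prod (big_rem i) ?mem_enum //=.
  by rewrite hornerXsubC subrr !mul0r.
have z : \sum_(i in S) lam' i * y i None ^+ d * q.[c i] = 0.
  by rewrite big1 // => i iS; rewrite qc // mulr0.
have Hm := moments e HA Hdec.
suff key : \sum_(i in S) lam' i * y i None ^+ d * q.[c i] = v e ^+ d.-1.
  by move: key; rewrite z => /esym /eqP; rewrite expf_eq0 (negbTE ve) andbF.
transitivity (\sum_(i in S) \sum_(m < d) q`_m * (lam' i * (y i (Some e) ^+ m * y i None ^+ (d - m)))).
  apply: eq_bigr => i iS; rewrite (horner_coef_wide (c i) (eq_leq sq)) big_distrr /=.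
  apply: eq_bigr => m _; rewrite /c.
  have b0 : y i None != 0 by move: iS; rewrite inE.
  have -> : y i None ^+ d = y i None ^+ m * y i None ^+ (d - m).
    by rewrite -exprD subnKC // ltnW.
  rewrite expr_div_n; field; by rewrite expf_eq0 (negbTE b0) andbF.
rewrite exchange_big /=.
transitivity (\sum_(m < d) q`_m * (if m == d.-1 :> nat then v e ^+ d.-1 else 0)).
  apply: eq_bigr => m _; rewrite -big_distrr /= -(Hm m (ltn_ord m)); congr (_ * _).
  rewrite [RHS](bigID (mem S)) /= [X in _ + X]big1 ?addr0 // => i.
  rewrite inE negbK => /eqP ->; rewrite expr0n /=.
  have -> : ((d - m)%N == 0%N) = false by apply/negbTE; rewrite -lt0n subn_gt0.
  by rewrite mulr0 mulr0.
have dm : (d.-1 < d)%N by lia.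
rewrite (bigD1 (Ordinal dm)) //= eqxx qd mul1r big1 ?addr0 // => m.
by rewrite -val_eqE /= => /negbTE ->; rewrite mulr0.
Qed.
Lemma prod_sub_expand (R : comNzRingType) (d : nat) (a b : 'I_d -> R) :
  \prod_(t < d) (a t - b t) =
  \sum_(h : {ffun 'I_d -> bool}) \prod_(t < d) (if h t then - b t else a t).
Proof.
rewrite -(bigA_distr_bigA (fun t (c : bool) => if c then - b t else a t)) /=.
by apply: eq_bigr => t _; rewrite big_bool /= addrC.
Qed.

Lemma proj_expand (R : realType) (I : finType) (d : nat) (C : tensor R I d) (v : I -> R)
  (A : tensor R (option I) d) (HA : is_SAdj C (tpow v d.-1) A)
  (s : nat) (lam' : 'I_s -> R) (y : 'I_s -> option I -> R)
  (Hdec : forall k, A k = \sum_(i < s) lam' i * tpow (y i) d k)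
  (g : 'I_d -> I -> R) (k : 'I_d -> I) :
  \sum_(i < s) lam' i * \prod_(t < d) (y i (Some (k t)) - y i None * g t (k t)) =
  C k - \sum_(j < d) g j (k j) * Vd v k j.
Proof.
case: HA => HA1 HA2 HA3.
set kh := fun (h : {ffun 'I_d -> bool}) t => if h t then None else Some (k t).
set W := fun (h : {ffun 'I_d -> bool}) => \prod_(t < d) (if h t then - g t (k t) else 1).
have step : \sum_(i < s) lam' i * \prod_(t < d) (y i (Some (k t)) - y i None * g t (k t))
   = \sum_(h : {ffun 'I_d -> bool}) W h * A (kh h).
  transitivity (\sum_(i < s) \sum_(h : {ffun 'I_d -> bool}) W h * (lam' i * tpow (y i) d (kh h))).
    apply: eq_bigr => i _; rewrite prod_sub_expand big_distrr /=; apply: eq_bigr => h _.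
    rewrite mulrCA; congr (_ * _); rewrite /W /tpow -big_split /=; apply: eq_bigr => t _.
    by rewrite /kh; case: (h t); rewrite ?mul1r // mulNr mulrC.
  rewrite exchange_big /=; apply: eq_bigr => h _; by rewrite -big_distrr /= Hdec.
rewrite step.
set h0 : {ffun 'I_d -> bool} := [ffun _ => false].
set dl := fun j : 'I_d => [ffun t => t == j] : {ffun 'I_d -> bool}.
have dl_inj : injective dl.
  by move=> j1 j2 /ffunP /(_ j2); rewrite !ffunE eqxx => /eqP.
set D := [set dl j | j in [set: 'I_d]].
rewrite (bigD1 h0) //= (bigID (mem D)) /=.
have -> : \sum_(i | (i != h0) && (i \in D)) W i * A (kh i) = \sum_(i in D) W i * A (kh i).
  apply: eq_bigl => h; case hD: (h \in D); rewrite ?andbF ?andbT //.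
  move: hD => /imsetP [j _ ->]; apply/eqP => /ffunP /(_ j); by rewrite !ffunE eqxx.
rewrite [X in _ + (_ + X)]big1 ?addr0; last first.
  move=> h /andP [hh0 hD]; apply/eqP; rewrite mulf_eq0; apply/orP; right; apply/eqP.
  apply: HA3; apply/card_gt1P.
  have [t1 ht1] : exists t1, h t1.
    apply/existsP; apply: contraR hh0 => /existsPn hn; apply/eqP/ffunP => t.
    by rewrite ffunE; apply/negbTE.
  have [t2 [ht2 t21]] : exists t2, h t2 /\ t2 != t1.
    have : [exists t, h t != dl t1 t].
      apply: contraR hD => /existsPn hn.
      have -> : h = dl t1 by apply/ffunP => t; apply/eqP; exact: negbNE (hn t).
      by apply: imset_f; rewrite inE.
    move/existsP => [t]; rewrite ffunE; case: (eqVneq t t1) => [-> | tt1]; first by rewrite ht1 eqxx.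
    by case ht: (h t) => // _; exists t.
  by exists t1, t2; rewrite !inE /kh ht1 ht2; split => //; rewrite eq_sym.
rewrite big_imset /=; last by move=> j1 j2 _ _; apply: dl_inj.
have -> : A (kh h0) = C k.
  rewrite -HA1; congr A; apply: functional_extensionality => t; by rewrite /kh ffunE.
have -> : W h0 = 1 by rewrite /W big1 // => t _; rewrite ffunE.
rewrite mul1r -sumrN; congr (_ + _); apply: eq_big => [j|j _]; first by rewrite inE.
have -> : A (kh (dl j)) = tpow v d.-1 (delete_at k j).
  rewrite -HA2; congr A; apply: functional_extensionality => t; by rewrite /kh ffunE.
rewrite del_prod /W (bigD1 j) //= ffunE eqxx big1 ?mulr1 ?mulNr //.
by move=> t tj; rewrite ffunE (negbTE tj).
Qed.
Lemma dual_basis (R : fieldType) (N r : nat) (f : 'I_r -> 'I_N -> R) (g : 'I_N -> R)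
  (Hind : forall (a : 'I_r -> R) b, (forall c, \sum_(j < r) a j * f j c + b * g c = 0) ->
           (forall j, a j = 0) /\ b = 0) :
  exists phi : 'I_r -> 'I_N -> R,
    (forall a j, \sum_(c < N) phi a c * f j c = (a == j)%:R) /\
    (forall a, \sum_(c < N) phi a c * g c = 0).
Proof.
set B : 'M[R]_(r + 1, N) := \matrix_(i, c) match split i with inl j => f j c | inr _ => g c end.
have fB : row_free B.
  apply: inj_row_free => w wB.
  have H : forall c, \sum_(j < r) w 0 (lshift 1 j) * f j c + w 0 (rshift r ord0) * g c = 0.
    move=> c; have := congr1 (fun M : 'M[R]_(1, N) => M 0 c) wB; rewrite !mxE big_split_ord /= big_ord1.
    rewrite mxE split_r => h; rewrite -[RHS]h; congr (_ + _); apply: eq_bigr => j _.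
    by rewrite mxE split_l.
  have [Ha Hb] := Hind _ _ H.
  apply/rowP => i; rewrite mxE -(splitK i); case: (split i) => j /=.
    by rewrite Ha.
  by rewrite (ord1 j) Hb.
have [B' HB'] := row_freeP fB.
exists (fun a c => B' c (lshift 1 a)); split.
  move=> a j; have := congr1 (fun M : 'M[R]_(r + 1) => M (lshift 1 j) (lshift 1 a)) HB'.
  rewrite !mxE (inj_eq (@lshift_inj _ _)) eq_sym => <-.
  by apply: eq_bigr => c _; rewrite mxE split_l mulrC.
move=> a; have := congr1 (fun M : 'M[R]_(r + 1) => M (rshift r ord0) (lshift 1 a)) HB'.
rewrite !mxE.
have -> : (rshift r (@ord0 0) == lshift 1 a) = false.
  by apply/negbTE; rewrite -val_eqE /= neq_ltn orbC ltn_addr.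
move=> h; transitivity (false%:R : R) => //; rewrite -h.
by apply: eq_bigr => c _; rewrite mxE split_r mulrC.
Qed.
Lemma rank_sum_le (F : fieldType) (m n : nat) (I : finType) (P : pred I) (M : I -> 'M[F]_(m, n)) :
  (\rank (\sum_(i | P i) M i)%R <= \sum_(i | P i) \rank (M i))%N.
Proof.
elim/big_rec2: _ => [|i k A _ IH]; first by rewrite mxrank0.
by apply: leq_trans (mxrank_add _ _) _; rewrite leq_add2l.
Qed.

Lemma rank_bound (R : fieldType) (r s : nat) (lam : 'I_r -> R) (lamnz : forall j, lam j != 0)
  (P : pred 'I_s) (U V : 'I_s -> 'I_r -> R)
  (H : forall a b, (a == b)%:R * lam a = \sum_(i | P i) U i a * V i b) :
  (r <= #|P|)%N.
Proof.
set d : 'rV[R]_r := \row_j lam j.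
have HM : diag_mx d = \sum_(i | P i) ((\col_a U i a) *m (\row_b V i b)).
  apply/matrixP => a b; rewrite !mxE summxE -mulr_natl H; apply: eq_bigr => i _.
  by rewrite !mxE big_ord1 !mxE.
have : \rank (diag_mx d) = r.
  apply: mxrank_unit; rewrite unitmxE det_diag unitfE; apply/prodf_neq0 => j _.
  by rewrite mxE.
move=> <-; rewrite HM; apply: leq_trans (rank_sum_le _ _) _.
rewrite -sum1_card; apply: leq_sum => i _.
by apply: leq_trans (mxrankM_maxl _ _) _; apply: rank_leq_col.
Qed.
Definition merge (I : finType) (m : nat) (k1 k2 : 'I_m -> I) (t : 'I_(m + m)) : I :=
  match split t with inl s => k1 s | inr s => k2 s end.

Lemma rl_neq (m n : nat) (i : 'I_n) (j : 'I_m) : (rshift m i == lshift n j) = false.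
Proof. by apply/negbTE; rewrite -val_eqE /= neq_ltn orbC ltn_addr. Qed.
Lemma lr_neq (m n : nat) (i : 'I_n) (j : 'I_m) : (lshift n j == rshift m i) = false.
Proof. by rewrite eq_sym rl_neq. Qed.

Lemma tpow_merge (R : realType) (I : finType) (m : nat) (u : I -> R) (k1 k2 : 'I_m -> I) :
  tpow u (m + m) (merge k1 k2) = tpow u m k1 * tpow u m k2.
Proof.
rewrite /tpow big_split_ord /merge; congr (_ * _); apply: eq_bigr => i _.
  by rewrite split_l.
by rewrite split_r.
Qed.

Lemma Vd_merge_l (R : realType) (I : finType) (m : nat) (v : I -> R) (k1 k2 : 'I_m -> I) (s : 'I_m) :
  Vd v (merge k1 k2) (lshift m s) = Vd v k1 s * tpow v m k2.
Proof.
rewrite /Vd big_split_ord /merge; congr (_ * _); apply: eq_bigr => i _.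
  by rewrite (inj_eq (@lshift_inj _ _)) split_l.
by rewrite rl_neq split_r.
Qed.

Lemma Vd_merge_r (R : realType) (I : finType) (m : nat) (v : I -> R) (k1 k2 : 'I_m -> I) (s : 'I_m) :
  Vd v (merge k1 k2) (rshift m s) = tpow v m k1 * Vd v k2 s.
Proof.
rewrite /Vd big_split_ord /merge; congr (_ * _); apply: eq_bigr => i _.
  by rewrite lr_neq split_l.
by rewrite (inj_eq (@rshift_inj _ _)) split_r.
Qed.

Lemma merge_l (I : finType) (m : nat) (k1 k2 : 'I_m -> I) (s : 'I_m) : merge k1 k2 (lshift m s) = k1 s.
Proof. by rewrite /merge split_l. Qed.
Lemma merge_r (I : finType) (m : nat) (k1 k2 : 'I_m -> I) (s : 'I_m) : merge k1 k2 (rshift m s) = k2 s.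
Proof. by rewrite /merge split_r. Qed.
Lemma dsum_factor (R : comNzRingType) (N : nat) (p q F G : 'I_N -> R) :
  \sum_(c1 < N) \sum_(c2 < N) p c1 * q c2 * (F c1 * G c2) =
  (\sum_(c1 < N) p c1 * F c1) * (\sum_(c2 < N) q c2 * G c2).
Proof.
rewrite big_distrl /=; apply: eq_bigr => c1 _; rewrite big_distrr /=.
by apply: eq_bigr => c2 _; rewrite mulrACA.
Qed.
Lemma lower (R : realType) (I : finType) (dl : nat) (dl0 : (0 < dl)%N)
  (C : tensor R I (dl + dl)) (v : I -> R) (e : I) (ve : v e != 0)
  (r : nat) (lam : 'I_r -> R) (x : 'I_r -> I -> R)
  (HT : Cmod C (tpow v (dl + dl).-1) (fun k => \sum_(j < r) lam j * tpow (x j) (dl + dl) k))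
  (lamnz : forall j, lam j != 0)
  (Hindep : forall (a : 'I_r -> R) (b : R),
      (forall k : 'I_dl -> I,
         \sum_(j < r) a j * tpow (x j) dl k + b * tpow v dl k = 0) ->
      (forall j, a j = 0) /\ b = 0)
  (A : tensor R (option I) (dl + dl)) (HA : is_SAdj C (tpow v (dl + dl).-1) A)
  (s : nat) (Hs : has_sdecomp A s) : (r + (dl + dl) <= s)%N.
Proof.
set n := (dl + dl)%N.
case: Hs => lam' [y Hdec].
have n0 : (0 < n)%N by rewrite /n addn_gt0 dl0.
have cS := count_S ve HA Hdec n0.
set S := [set i | y i None != 0%R] in cS.
set f := fun j : 'I_n => enum_val (widen_ord cS j) : 'I_s.
have f_inj : injective f by move=> j1 j2 /enum_val_inj /(congr1 val) /= /val_inj.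
have fS : forall j, y (f j) None != 0.
  by move=> j; have := enum_valP (widen_ord cS j); rewrite inE.
set g := fun t a => y (f t) (Some a) / y (f t) None.
have HX := proj_expand HA Hdec g.
case: HT => c Hc.
set N := #|{ffun 'I_dl -> I}|.
set ev := fun c : 'I_N => (enum_val c : {ffun 'I_dl -> I}).
have tpf : forall (u : I -> R) (k : 'I_dl -> I), tpow u dl [ffun t => k t] = tpow u dl k.
  by move=> u k; apply: eq_bigr => t _; rewrite ffunE.
have Hind' : forall (a : 'I_r -> R) b,
    (forall c0 : 'I_N, \sum_(j < r) a j * tpow (x j) dl (ev c0) + b * tpow v dl (ev c0) = 0) ->
    (forall j, a j = 0) /\ b = 0.
  move=> a b H; apply: Hindep => k; have := H (enum_rank [ffun t => k t]).
  rewrite /ev enum_rankK tpf; under eq_bigr => j _ do rewrite tpf; done.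
have [phi [Hp1 Hp2]] := dual_basis Hind'.
set F := [set f j | j in [set: 'I_n]].
set P := [pred i : 'I_s | i \notin F].
have cardP : #|P| = (s - n)%N.
  have hF : #|F| = n by rewrite card_imset // cardsT card_ord.
  have h := cardC (mem F); rewrite card_ord hF in h.
  have -> : #|P| = #|[predC mem F]| by apply: eq_card.
  by rewrite -[in RHS]h addKn.
set pi := fun i (t : 'I_n) a => y i (Some a) - y i None * g t a.
set U := fun i a => lam' i * \sum_(c1 < N) phi a c1 * \prod_(s0 < dl) pi i (lshift dl s0) (ev c1 s0).
set V := fun i b => \sum_(c2 < N) phi b c2 * \prod_(s0 < dl) pi i (rshift dl s0) (ev c2 s0).
set Xm := fun c1 c2 => merge (ev c1) (ev c2).
have key : forall a b, (a == b)%:R * lam a = \sum_(i | P i) U i a * V i b.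
  move=> a b.
  set Q := \sum_(c1 < N) \sum_(c2 < N) phi a c1 * phi b c2 *
     (\sum_(i < s) lam' i * \prod_(t < n) pi i t (Xm c1 c2 t)).
  have Q2 : Q = \sum_(i < s) U i a * V i b.
    transitivity (\sum_(i < s) lam' i * \sum_(c1 < N) \sum_(c2 < N) phi a c1 * phi b c2 *
       ((\prod_(s0 < dl) pi i (lshift dl s0) (ev c1 s0)) * \prod_(s0 < dl) pi i (rshift dl s0) (ev c2 s0))).
      rewrite /Q.
      transitivity (\sum_(c1 < N) \sum_(c2 < N) \sum_(i < s) phi a c1 * phi b c2 *
          (lam' i * \prod_(t < n) pi i t (Xm c1 c2 t))).
        by apply: eq_bigr => c1 _; apply: eq_bigr => c2 _; rewrite big_distrr.
      under eq_bigr => c1 _ do rewrite exchange_big /=.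
      rewrite exchange_big /=; apply: eq_bigr => i _.
      rewrite big_distrr /=; apply: eq_bigr => c1 _; rewrite big_distrr /=; apply: eq_bigr => c2 _.
      rewrite /Xm big_split_ord /= mulrCA; congr (_ * (_ * (_ * _))).
        by apply: eq_bigr => s0 _; rewrite merge_l.
      by apply: eq_bigr => s0 _; rewrite merge_r.
    apply: eq_bigr => i _; rewrite dsum_factor /U /V mulrA //.
  have Q1 : Q = (a == b)%:R * lam a.
    set h := fun j a0 => c j a0 + g j a0.
    have HC' : forall k, C k = \sum_(l < r) lam l * tpow (x l) n k - \sum_(j < n) c j (k j) * Vd v k j.
      move=> k; rewrite Hc; under [X in _ + X - _]eq_bigr => j _ do rewrite del_prod.
      by rewrite addrK.
    have inner : forall c1 c2, \sum_(i < s) lam' i * \prod_(t < n) pi i t (Xm c1 c2 t) =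
        \sum_(l < r) lam l * (tpow (x l) dl (ev c1) * tpow (x l) dl (ev c2)) -
        \sum_(j < n) h j (Xm c1 c2 j) * Vd v (Xm c1 c2) j.
      move=> c1 c2; rewrite /pi HX HC' -addrA -opprD -big_split /=.
      congr (_ - _).
        by apply: eq_bigr => l _; rewrite /Xm tpow_merge.
      by apply: eq_bigr => j _; rewrite -mulrDl.
    rewrite /Q.
    transitivity (\sum_(c1 < N) \sum_(c2 < N) \sum_(l < r) lam l * (phi a c1 * phi b c2 *
        (tpow (x l) dl (ev c1) * tpow (x l) dl (ev c2))) -
        \sum_(j < n) \sum_(c1 < N) \sum_(c2 < N) phi a c1 * phi b c2 *
        (h j (Xm c1 c2 j) * Vd v (Xm c1 c2) j)).
      set W := fun j c1 c2 => phi a c1 * phi b c2 * (h j (Xm c1 c2 j) * Vd v (Xm c1 c2) j).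
      have E : \sum_(j < n) \sum_(c1 < N) \sum_(c2 < N) W j c1 c2 =
               \sum_(c1 < N) \sum_(c2 < N) \sum_(j < n) W j c1 c2.
        by rewrite exchange_big; apply: eq_bigr => c1 _; rewrite exchange_big.
      rewrite E -sumrB; apply: eq_bigr => c1 _.
      rewrite -sumrB; apply: eq_bigr => c2 _.
      rewrite inner mulrBr big_distrr big_distrr /=; congr (_ - _).
      by apply: eq_bigr => l _; rewrite mulrCA.
    have P2 : \sum_(j < n) \sum_(c1 < N) \sum_(c2 < N) phi a c1 * phi b c2 *
        (h j (Xm c1 c2 j) * Vd v (Xm c1 c2) j) = 0.
      apply: big1 => j _; case: (splitP j) => s0 hj.
        have -> : j = lshift dl s0 by apply: val_inj.
        transitivity (\sum_(c1 < N) \sum_(c2 < N) phi a c1 * phi b c2 *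
          ((h (lshift dl s0) (ev c1 s0) * Vd v (ev c1) s0) * tpow v dl (ev c2))).
          apply: eq_bigr => c1 _; apply: eq_bigr => c2 _.
          by rewrite /Xm merge_l Vd_merge_l !mulrA.
        by rewrite dsum_factor Hp2 mulr0.
      have -> : j = rshift dl s0 by apply: val_inj.
      transitivity (\sum_(c1 < N) \sum_(c2 < N) phi a c1 * phi b c2 *
        (tpow v dl (ev c1) * (h (rshift dl s0) (ev c2 s0) * Vd v (ev c2) s0))).
        apply: eq_bigr => c1 _; apply: eq_bigr => c2 _.
        by rewrite /Xm merge_r Vd_merge_r; ring.
      by rewrite dsum_factor Hp2 mul0r.
    rewrite P2 subr0.
    transitivity (\sum_(l < r) lam l * ((\sum_(c1 < N) phi a c1 * tpow (x l) dl (ev c1)) *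
        (\sum_(c2 < N) phi b c2 * tpow (x l) dl (ev c2)))).
      under eq_bigr => c1 _ do rewrite exchange_big /=.
      rewrite exchange_big /=; apply: eq_bigr => l _; rewrite -dsum_factor big_distrr /=.
      apply: eq_bigr => c1 _; rewrite big_distrr /=; apply: eq_bigr => c2 _ //.
    rewrite (bigD1 a) //= !Hp1 eqxx big1 ?addr0; last first.
      by move=> l al; rewrite !Hp1 eq_sym (negbTE al) mul0r mulr0.
    by rewrite mul1r mulrC eq_sym.
  rewrite -Q1 Q2 (bigID P) /= [X in _ + X]big1 ?addr0 //.
  move=> i; rewrite /P /= negbK => /imsetP [j _ ->].
  have pz : forall a0, pi (f j) j a0 = 0.
    move=> a0; rewrite /pi /g mulrC divfK ?subrr //.
  case: (splitP j) => s0 hj.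
    have ej : j = lshift dl s0 by apply: val_inj.
    rewrite {}ej in pz *.
    rewrite /U big1 ?mulr0 ?mul0r // => c1 _.
    by rewrite (bigD1 s0) //= pz mul0r mulr0.
  have ej : j = rshift dl s0 by apply: val_inj.
  rewrite {}ej in pz *.
  rewrite /V big1 ?mulr0 ?mul0r // => c2 _.
  by rewrite (bigD1 s0) //= pz mul0r mulr0.
have hr := rank_bound lamnz key; rewrite cardP in hr.
have hsS : (#|S| <= s)%N by apply: leq_trans (max_card _) _; rewrite card_ord.
lia.
Qed.
Unset Implicit Arguments.

Theorem proposition3p19 (R : realType) (I : finType) (d delta : nat)
  (Hd : d = (2 * delta)%N) (Hdelta : (0 < delta)%N)
  (C : tensor R I d) (HC : sym_tensor C)
  (v : I -> R) (Hv : v <> (fun _ => 0))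
  (r : nat) (lam : 'I_r -> R) (x : 'I_r -> I -> R)
  (HT : Cmod C (tpow v d.-1) (fun k => \sum_(j < r) lam j * tpow (x j) d k))
  (Hmin : is_minsrk (Cmod C (tpow v d.-1)) r)
  (Hindep : forall (a : 'I_r -> R) (b : R),
      (forall k : 'I_delta -> I,
         \sum_(j < r) a j * tpow (x j) delta k + b * tpow v delta k = 0) ->
      (forall j, a j = 0) /\ b = 0) :
  forall A : tensor R (option I) d, is_SAdj C (tpow v d.-1) A ->
    is_srk A (r + d)%N.
Proof.
move=> A HA.
have Hd' : d = (delta + delta)%N by rewrite Hd mul2n addnn.
clear Hd; subst d.
have [e ve] : exists e, v e != 0.
  apply/existsP; apply: contraT => /existsPn hn; exfalso; apply: Hv.
  by apply: functional_extensionality => a; apply/eqP; exact: negbNE (hn a).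
have lamnz : forall j, lam j != 0.
  move=> j0; apply/eqP => l0.
  case: Hmin => _ Hm2.
  have hd : has_sdecomp (fun k => \sum_(j < r) lam j * tpow (x j) (delta + delta) k) r.-1.
    exists (fun i => lam (lift j0 i)), (fun i => x (lift j0 i)) => k.
    by rewrite (bigD1_ord j0) //= l0 mul0r add0r.
  have := Hm2 _ HT (sym_sum lam x) _ hd.
  have := ltn_ord j0; rewrite -subn1; lia.
split.
  exact: (@upper R I delta e C HC v r lam x HT A HA).
move=> s Hs; exact: (@lower R I delta Hdelta C v e ve r lam x HT lamnz Hindep A HA s Hs).
Qed.
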